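(* (i) Let $\mathbb{F}$ be a finite field of characteristic $2$, let $u_1,u_2,u_3$ be linearly independent vectors over $\mathbb{F}$, and let $\mathcal{X}_1=\{Y_1,Y_2,Y_3,W_1,W_2,W_3,W_4\}$ with $Y_i=\langle u_i\rangle$ ($i=1,2,3$), $W_1=\langle u_1+u_2\rangle$, $W_2=\langle u_2+u_3\rangle$, $W_3=\langle u_1+u_2+u_3\rangle$, $W_4=\langle u_1+u_3\rangle$, and $\Phi_1(\mathcal{A})=\dim\langle\mathcal{A}\rangle$ for $\mathcal{A}\subseteq\mathcal{X}_1$. Then $(\mathcal{X}_1,\Phi_1)$ is even representable but not almost odd representable. (ii) Let $\mathbb{F}'$ be a finite field of odd characteristic, let $u_1,\dots,u_5$ be linearly independent vectors over $\mathbb{F}'$, and let $\mathcal{X}_2=\{Z_1,\dots,Z_5,V_1,\dots,V_8\}$ with $Z_i=\langle u_i\rangle$ ($i=1,\dots,5$), $V_1=\langle u_1+u_2+u_3\rangle$, $V_2=\langle u_3+u_4+u_5\rangle$, $V_3=\langle u_1+u_2\rangle$, $V_4=\langle u_1+u_3\rangle$, $V_5=\langle u_2+u_3\rangle$, $V_6=\langle u_3+u_4\rangle$, $V_7=\langle u_3+u_5\rangle$, $V_8=\langle u_4+u_5\rangle$, and $\Phi_2(\mathcal{A})=\dim\langle\mathcal{A}\rangle$ for $\mathcal{A}\subseteq\mathcal{X}_2$. Then $(\mathcal{X}_2,\Phi_2)$ is odd representable but not almost even representable.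
   Context: For a set $\mathcal{A}$ of subspaces, $\langle\mathcal{A}\rangle$ is the smallest subspace containing all of them. A polymatroid $(\mathcal{X},\mathbf{h})$ with $\mathcal{X}=\{X_1,\dots,X_n\}$ is $q$-representable if there exist subspaces $V_1,\dots,V_n$ of a vector space over $\mathbb{F}_q$ with $\mathbf{h}(\{X_i:i\in\alpha\})=\dim\langle V_i:i\in\alpha\rangle$ for all $\alpha\subseteq\{1,\dots,n\}$; even representable if $2^m$-representable for some positive integer $m$; odd representable if $p^m$-representable for some odd prime $p$ and positive integer $m$. Viewing rank functions as vectors in $\mathbb{R}^{2^{|\mathcal{X}|}}$, $\mathbf{h}$ is almost even (resp. almost odd) representable if $\mathbf{h}=\lim_{i\to\infty}c_i\mathbf{g}_i$ for some even (resp. odd) representable rank functions $\mathbf{g}_i$ on $\mathcal{X}$ and positive reals $c_i$. *)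

(* Defs.v *)
From HB Require Import structures.
From mathcomp Require Import all_boot all_order all_algebra.
From mathcomp Require Import all_classical all_reals topology normedtype sequences.
Set Implicit Arguments. Unset Strict Implicit. Unset Printing Implicit Defensive.
Import Order.TTheory GRing.Theory Num.Theory.
Import numFieldNormedType.Exports.
Local Open Scope classical_set_scope.
Local Open Scope ring_scope.

Definition q_representable (n q : nat) (h : {set 'I_n} -> nat) : Prop :=
  exists (F : finFieldType) (vT : vectType F) (V : 'I_n -> {vspace vT}),
    #|F| = q /\ forall A : {set 'I_n}, h A = \dim (\sum_(i in A) V i)%VS.

Definition even_representable (n : nat) (h : {set 'I_n} -> nat) : Prop :=
  exists m : nat, (0 < m)%N /\ q_representable (2 ^ m) h.

Definition odd_representable (n : nat) (h : {set 'I_n} -> nat) : Prop :=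
  exists p m : nat, [/\ prime p, odd p, (0 < m)%N & q_representable (p ^ m) h].

Definition almost_even_representable (R : realType) (n : nat)
    (h : {set 'I_n} -> R) : Prop :=
  exists (g : nat -> {set 'I_n} -> nat) (c : nat -> R),
    [/\ forall k, even_representable (g k),
        forall k, 0 < c k &
        forall A : {set 'I_n}, (fun k => c k * ((g k A)%:R)) @ \oo --> h A].

Definition almost_odd_representable (R : realType) (n : nat)
    (h : {set 'I_n} -> R) : Prop :=
  exists (g : nat -> {set 'I_n} -> nat) (c : nat -> R),
    [/\ forall k, odd_representable (g k),
        forall k, 0 < c k &
        forall A : {set 'I_n}, (fun k => c k * ((g k A)%:R)) @ \oo --> h A].

Definition span_rank (F : fieldType) (vT : vectType F) (n : nat)
    (w : 'I_n -> vT) (A : {set 'I_n}) : nat :=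
  \dim (\sum_(i in A) <[w i]>)%VS.

(* X_1 = {Y1,Y2,Y3,W1,W2,W3,W4}, generators in this order. *)
Definition X1_gens (F : fieldType) (vT : vectType F) (u1 u2 u3 : vT) : 'I_7 -> vT :=
  tnth [tuple u1; u2; u3; u1 + u2; u2 + u3; u1 + u2 + u3; u1 + u3].

(* X_2 = {Z1..Z5,V1..V8}, generators in this order. *)
Definition X2_gens (F : fieldType) (vT : vectType F) (u1 u2 u3 u4 u5 : vT)
    : 'I_13 -> vT :=
  tnth [tuple u1; u2; u3; u4; u5;
              u1 + u2 + u3; u3 + u4 + u5; u1 + u2; u1 + u3; u2 + u3;
              u3 + u4; u3 + u5; u4 + u5].

(* Main.v *)
Require Import Defs.
From HB Require Import structures.
From mathcomp Require Import all_boot all_order all_algebra all_field.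
From mathcomp Require Import all_classical all_reals topology normedtype sequences.
From mathcomp Require Import ring lra zify.
Set Implicit Arguments. Unset Strict Implicit. Unset Printing Implicit Defensive.
Import Order.TTheory GRing.Theory Num.Theory.
Import numFieldNormedType.Exports.
Import VectorInternalTheory.
Local Open Scope ring_scope.
Section Co.
Variables (F : fieldType) (vT : vectType F).
Definition co (j : 'I_(dim vT)) (x : vT) : F := v2r x 0 j.
Lemma coD j x y : co j (x + y) = co j x + co j y.
Proof. by rewrite /co raddfD mxE. Qed.
Lemma coN j x : co j (- x) = - co j x.
Proof. by rewrite /co raddfN mxE. Qed.
Lemma co_inj (x y : vT) : (forall j, co j x = co j y) -> x = y.
Proof. by move=> h; apply: (can_inj (@v2rK _ _)); apply/rowP => j; exact: h. Qed.
End Co.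
Ltac vring := apply: co_inj => j; rewrite ?(coD, coN); ring.

Section Core.
Variables (F : fieldType) (vT : vectType F).
Implicit Types A B C P Q T S X Y W U : {vspace vT}.

Lemma dimcap X Y : (\dim (X :&: Y) + \dim (X + Y) = \dim X + \dim Y)%N.
Proof. by rewrite addnC dimv_sum_cap. Qed.

Lemma dimcapD X Y W : (\dim (X :&: (Y + W)) <= \dim (X :&: Y) + \dim W)%N.
Proof.
set U := (X :&: (Y + W))%VS.
have h1 := dimcap U Y.
have e : (U :&: Y = X :&: Y)%VS.
  apply/eqP; rewrite eqEsubv; apply/andP; split.
    by apply: capvS => //; apply: capvSl.
  rewrite subv_cap capvSr andbT subv_cap capvSl /=.
  by apply: subv_trans (capvSr _ _) (addvSl _ _).
have h2 : (\dim (U + Y) <= \dim (Y + W))%N.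
  apply: dimvS; rewrite subv_add addvSl andbT.
  by apply: subv_trans (capvSr _ _) _.
have h3 := dimcap Y W.
rewrite e in h1. lia.
Qed.

Lemma dimcap3 X Y W : (\dim (X :&: Y) + \dim (X :&: W) <= \dim (X :&: Y :&: W) + \dim X)%N.
Proof.
have h := dimcap (X :&: Y) (X :&: W).
have e : ((X :&: Y) :&: (X :&: W) = X :&: Y :&: W)%VS.
  by rewrite capvA -(capvA X Y X) (capvC Y X) capvA capvv -capvA.
have : (\dim (X :&: Y + X :&: W) <= \dim X)%N.
  by apply: dimvS; rewrite subv_add !capvSl.
rewrite e in h; lia.
Qed.

Lemma dimL2 T X Q Q' : (Q' <= Q)%VS ->
  (\dim (T + (X + Q')) + \dim (X + Q) + \dim Q' <= \dim (T + (X + Q)) + \dim (X + Q') + \dim Q)%N.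
Proof.
move=> sQ.
have h1 : (\dim (T + (X + Q')) <= \dim (T + (X + Q)))%N.
  by apply: dimvS; apply: addvS => //; apply: addvS.
have h2 := dimcap (X + Q') Q.
have e : ((X + Q') + Q = X + Q)%VS.
  by rewrite -addvA (addv_idPr sQ).
have h3 : (\dim Q' <= \dim ((X + Q') :&: Q))%N.
  by apply: dimvS; rewrite subv_cap sQ addvSr.
rewrite e in h2; lia.
Qed.


Definition Kof A B C := (A :&: (B + C) + B :&: (A + C) + C :&: (A + B))%VS.

Lemma K1 A B C x : x \in A -> x \in (B + C)%VS -> x \in Kof A B C.
Proof. by move=> h1 h2; do 2 apply: (subvP (addvSl _ _)); rewrite memv_cap h1 h2. Qed.
Lemma K2 A B C x : x \in B -> x \in (A + C)%VS -> x \in Kof A B C.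
Proof. by move=> h1 h2; apply: (subvP (addvSl _ _)); apply: (subvP (addvSr _ _)); rewrite memv_cap h1 h2. Qed.
Lemma K3 A B C x : x \in C -> x \in (A + B)%VS -> x \in Kof A B C.
Proof. by move=> h1 h2; apply: (subvP (addvSr _ _)); rewrite memv_cap h1 h2. Qed.

Lemma dimK A B C : (\dim (Kof A B C) <= \dim (A :&: (B + C)) + \dim (B :&: (A + C)) + \dim (C :&: (A + B)))%N.
Proof.
rewrite /Kof; have h1 := dimcap (A :&: (B + C) + B :&: (A + C))%VS (C :&: (A + B)).
have h2 := dimcap (A :&: (B + C))%VS (B :&: (A + C)). lia.
Qed.

Lemma keyI A B C P Q T S (two : (2%:R : F) != 0) :
  (T :&: (A + Q :&: (B + C)) :&: (C + P :&: (A + B)) :&: (B + S :&: (A + C) :&: (P :&: (A + B) + Q :&: (B + C)))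
    <= T :&: (A + C + (P :&: (B + Kof A B C) + Q :&: (B + Kof A B C) + Kof A B C)))%VS.
Proof.
set K := Kof A B C; set Q' := (Q :&: (B + C))%VS; set P' := (P :&: (A + B))%VS.
set Z := (P :&: (B + K) + Q :&: (B + K) + K)%VS.
apply/subvP => t.
move=> /memv_capP[/memv_capP[/memv_capP[tT tAQ] tCP] tBS].
apply/memv_capP; split => //.
case/memv_addP: tAQ => a aA [q /memv_capP[qQ /memv_addP[b1 b1B [c1 c1C Eq]]] Et1].
case/memv_addP: tCP => c cC [p /memv_capP[pP /memv_addP[a2 a2A [b2 b2B Ep]]] Et2].
case/memv_addP: tBS => b bB [s /memv_capP[/memv_capP[sS /memv_addP[a3 a3A [c3 c3C Es1]]] /memv_addP[p' /memv_capP[p'P /memv_addP[a4 a4A [b4 b4B Ep']]] [q' /memv_capP[q'Q /memv_addP[b5 b5B [c5 c5C Eq']]] Es2]]] Et3].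
have kA : a2 - a4 \in K.
  apply: K1; first by rewrite rpredB.
  have -> : a2 - a4 = (b + b4 + b5 - b2) + (c5 - c).
    apply/eqP; rewrite -subr_eq0.
    have -> : a2 - a4 - (b + b4 + b5 - b2 + (c5 - c)) = (c + (a2 + b2)) - (b + ((a4 + b4) + (b5 + c5))) by vring.
    by rewrite -Ep -Ep' -Eq' -Es2 -Et2 -Et3 subrr.
  by rewrite memv_add // ?rpredB ?rpredD.
have kC : c1 - c5 \in K.
  apply: K3; first by rewrite rpredB.
  have -> : c1 - c5 = (a4 - a) + (b + b4 + b5 - b1).
    apply/eqP; rewrite -subr_eq0.
    have -> : c1 - c5 - (a4 - a + (b + b4 + b5 - b1)) = (a + (b1 + c1)) - (b + ((a4 + b4) + (b5 + c5))) by vring.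
    by rewrite -Eq -Eq' -Ep' -Es2 -Et1 -Et3 subrr.
  by rewrite memv_add // ?rpredB ?rpredD.
have kB : b - b1 \in K.
  apply: K2; first by rewrite rpredB.
  have -> : b - b1 = (a - a3) + (c1 - c3).
    apply/eqP; rewrite -subr_eq0.
    have -> : b - b1 - (a - a3 + (c1 - c3)) = (b + (a3 + c3)) - (a + (b1 + c1)) by vring.
    by rewrite -Eq -Es1 -Et1 -Et3 subrr.
  by rewrite memv_add // ?rpredB ?rpredD.
have kC2 : c - c1 \in K.
  apply: K3; first by rewrite rpredB.
  have -> : c - c1 = (a - a2) + (b1 - b2).
    apply/eqP; rewrite -subr_eq0.
    have -> : c - c1 - (a - a2 + (b1 - b2)) = (c + (a2 + b2)) - (a + (b1 + c1)) by vring.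
    by rewrite -Eq -Ep -Et1 -Et2 subrr.
  by rewrite memv_add // ?rpredB ?rpredD.
have b2Z : b *+ 2 \in Z.
  have -> : b *+ 2 = (p - p') + (q - q') + ((b - b1) + (c - c1)).
    apply/eqP; rewrite -subr_eq0.
    have -> : b *+ 2 - (p - p' + (q - q') + (b - b1 + (c - c1)))
      = ((p' + q') - (t - b)) - (p - (t - c)) - (q - (b1 + c1)) by rewrite mulr2n; vring.
    have z1 : (p' + q') - (t - b) = 0 by rewrite -Es2 Et3 (addrC b s) addrK subrr.
    have z2 : p - (t - c) = 0 by rewrite Et2 (addrC c p) addrK subrr.
    have z3 : q - (b1 + c1) = 0 by rewrite Eq subrr.
    by rewrite z1 z2 z3 !subr0.
  apply: memv_add; last by rewrite rpredD.
  apply: memv_add; apply/memv_capP; (split; first by rewrite rpredB).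
    have -> : p - p' = (b2 - b4) + (a2 - a4) by rewrite Ep Ep'; vring.
    by rewrite memv_add // rpredB.
  have -> : q - q' = (b1 - b5) + (c1 - c5) by rewrite Eq Eq'; vring.
  by rewrite memv_add // rpredB.
have bZ : b \in Z.
  have -> : b = (2%:R)^-1 *: (b *+ 2) by rewrite -scaler_nat scalerA mulVf // scale1r.
  by rewrite memvZ.
rewrite Et3 Es1 addrC; apply: memv_add => //; exact: memv_add.
Qed.


Lemma dimcapT X T W : (X <= T)%VS ->
  (\dim X + \dim (T :&: W) <= \dim (X :&: W) + \dim T)%N.
Proof.
move=> sXT; have h := dimcap X (T :&: W).
have e : (X :&: (T :&: W) = X :&: W)%VS by rewrite capvA (capv_idPl sXT).
have : (\dim (X + T :&: W) <= \dim T)%N.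
  by apply: dimvS; rewrite subv_add sXT capvSl.
rewrite e in h; lia.
Qed.

Lemma dimL2' X X' Y : (X' <= X)%VS ->
  (\dim (X + Y) + \dim X' <= \dim (X' + Y) + \dim X)%N.
Proof.
move=> sX; have h := dimcap (X' + Y) X.
have e : (X' + Y + X = X + Y)%VS by rewrite -addvA (addvC Y X) addvA (addv_idPr sX).
have : (\dim X' <= \dim ((X' + Y) :&: X))%N by apply: dimvS; rewrite subv_cap sX addvSl.
rewrite e in h; lia.
Qed.

Lemma dimZ3 X Y W : (\dim (X + Y + W) <= \dim X + \dim Y + \dim W)%N.
Proof. have h1 := dimcap (X + Y) W; have h2 := dimcap X Y; lia. Qed.

Lemma fano_ineq A B C P Q T S : (2%:R : F) != 0 ->
 (\dim T + \dim (A + Q) + \dim (B + C) + \dim (C + P) + \dim (A + B) + \dim (B + S)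
  + \dim (A + C) + \dim (P + Q) + \dim (A + B) + \dim (B + C) + \dim (T + (A + C))
  + \dim (P + B) + \dim (Q + B)
  + 3 * (\dim (A + (B + C)) + \dim (B + (A + C)) + \dim (C + (A + B)))
 <= \dim (T + (A + Q)) + \dim (Q + (B + C)) + \dim (T + (C + P)) + \dim (P + (A + B))
  + \dim (T + (B + S)) + \dim (S + (A + C)) + \dim (S + (P + Q)) + \dim (P + (A + B))
  + \dim (Q + (B + C)) + \dim T + \dim (A + C) + \dim P + \dim B + \dim Q + \dim B
  + 3 * (\dim A + \dim (B + C) + \dim B + \dim (A + C) + \dim C + \dim (A + B)))%N.
Proof.
move=> two.
have key := keyI A B C P Q T S two.
set K := Kof A B C in key; set Q' := (Q :&: (B + C))%VS in key.
set P' := (P :&: (A + B))%VS in key.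
set S' := (S :&: (A + C) :&: (P' + Q'))%VS in key.
set Z := (P :&: (B + K) + Q :&: (B + K) + K)%VS in key.
have g1 := dimvS key.
have g2 := dimcapD T (A + C) Z.
have g3 : (\dim Z <= \dim (P :&: (B + K)) + \dim (Q :&: (B + K)) + \dim K)%N := dimZ3 _ _ _.
have g4 := dimcapD P B K.
have g5 := dimcapD Q B K.
have g6 : (\dim K <= \dim (A :&: (B + C)) + \dim (B :&: (A + C)) + \dim (C :&: (A + B)))%N := dimK A B C.
have c1 := dimcap T (A + C).
have c2 := dimcap P B.
have c3 := dimcap Q B.
have c4 := dimcap A (B + C).
have c5 := dimcap B (A + C).
have c6 := dimcap C (A + B).
have l1 := dimcap3 T (A + Q') (C + P').
have l2 := @dimcapT (T :&: (A + Q') :&: (C + P')) T (B + S') (subv_trans (capvSl _ _) (capvSl _ _)).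
have l3 := dimcap T (A + Q').
have l4 := dimcap T (C + P').
have l5 := dimcap T (B + S').
have m1 := @dimL2 T A Q Q' (capvSl _ _).
have m2 := @dimL2 T C P P' (capvSl _ _).
have m3 := @dimL2 T B (S :&: (A + C)) S' (capvSl _ _).
have m3' : (\dim (T + (B + S :&: (A + C))) <= \dim (T + (B + S)))%N.
  by apply: dimvS; apply: addvS => //; apply: addvS => //; apply: capvSl.
have m3'' : (\dim (B + S) + \dim (S :&: (A + C)) <= \dim (B + S :&: (A + C)) + \dim S)%N.
  have := @dimL2' S (S :&: (A + C)) B (capvSl _ _); rewrite (addvC S B) (addvC (S :&: (A + C))%VS B).
  have := dimvS (capvSl S (A + C)); lia.
have n1 := dimcap Q (B + C).
have n2 := dimcap P (A + B).
have n3 := dimcap3 S (A + C) (P' + Q').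
have n4 := dimcap S (A + C).
have n5 := dimcap S (P' + Q').
have n6 : (\dim (S + (P' + Q')) <= \dim (S + (P + Q)))%N.
  by apply: dimvS; apply: addvS => //; apply: addvS; apply: capvSl.
have n8 := @dimL2' Q Q' P' (capvSl _ _).
rewrite (addvC Q P') (addvC Q' P') in n8.
have n9 : (\dim (P + Q) + \dim P' <= \dim (P' + Q) + \dim P)%N.
  exact: (@dimL2' P P' Q (capvSl _ _)).
move: n1 n2 n3; rewrite -/Q' -/P' -/S' => n1 n2 n3.
lia.
Qed.

Lemma keyII A B C P Q T S (two : (2%:R : F) = 0) :
  (S :&: (A + C) :&: (B + T :&: (A + Q :&: (B + C)) :&: (C + P :&: (A + B)))
    <= S :&: (P + Q + Kof A B C))%VS.
Proof.
set K := Kof A B C; set Q' := (Q :&: (B + C))%VS; set P' := (P :&: (A + B))%VS.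
apply/subvP => s.
move=> /memv_capP[/memv_capP[sS /memv_addP[a3 a3A [c3 c3C Es1]]] sBT].
apply/memv_capP; split => //.
case/memv_addP: sBT => b bB [t /memv_capP[/memv_capP[tT tAQ] tCP] Es].
case/memv_addP: tAQ => a aA [q /memv_capP[qQ /memv_addP[b1 b1B [c1 c1C Eq]]] Et1].
case/memv_addP: tCP => c cC [p /memv_capP[pP /memv_addP[a2 a2A [b2 b2B Ep]]] Et2].
have kB : b + b1 \in K.
  apply: K2; first by rewrite rpredD.
  have -> : b + b1 = (a3 - a) + (c3 - c1).
    apply/eqP; rewrite -subr_eq0.
    have -> : b + b1 - (a3 - a + (c3 - c1)) = (b + (a + (b1 + c1))) - (a3 + c3) by vring.
    by rewrite -Eq -Et1 -Es -Es1 subrr.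
  by rewrite memv_add // ?rpredB ?rpredD.
have kC2 : c - c1 \in K.
  apply: K3; first by rewrite rpredB.
  have -> : c - c1 = (a - a2) + (b1 - b2).
    apply/eqP; rewrite -subr_eq0.
    have -> : c - c1 - (a - a2 + (b1 - b2)) = (c + (a2 + b2)) - (a + (b1 + c1)) by vring.
    by rewrite -Eq -Ep -Et1 -Et2 subrr.
  by rewrite memv_add // ?rpredB ?rpredD.
have b20 : b1 *+ 2 = 0 by rewrite -scaler_nat two scale0r.
have -> : s = p + q + ((b + b1) + (c - c1)) - b1 *+ 2.
  apply/eqP; rewrite -subr_eq0.
  have -> : s - (p + q + ((b + b1) + (c - c1)) - b1 *+ 2)
    = (s - (b + t)) - (p - (t - c)) - (q - (b1 + c1)) by rewrite mulr2n; vring.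
  have z1 : s - (b + t) = 0 by rewrite Es subrr.
  have z2 : p - (t - c) = 0 by rewrite Et2 (addrC c p) addrK subrr.
  have z3 : q - (b1 + c1) = 0 by rewrite Eq subrr.
  by rewrite z1 z2 z3 !subr0.
rewrite b20 subr0; apply: memv_add; first exact: memv_add.
by rewrite rpredD.
Qed.

Lemma nonfano_ineq A B C P Q T S : (2%:R : F) = 0 ->
 (\dim S + \dim (A + C) + \dim (B + T) + \dim (A + Q) + \dim (B + C) + \dim (C + P)
  + \dim (A + B) + \dim (S + (P + Q))
  + (\dim (A + (B + C)) + \dim (B + (A + C)) + \dim (C + (A + B)))
 <= \dim (S + (A + C)) + \dim (S + (B + T)) + \dim (T + (A + Q)) + \dim (Q + (B + C))
  + \dim (T + (C + P)) + \dim (P + (A + B)) + \dim S + \dim (P + Q)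
  + (\dim A + \dim (B + C) + \dim B + \dim (A + C) + \dim C + \dim (A + B)))%N.
Proof.
move=> two.
have key := keyII A B C P Q T S two.
set K := Kof A B C in key; set Q' := (Q :&: (B + C))%VS in key.
set P' := (P :&: (A + B))%VS in key.
set T' := (T :&: (A + Q') :&: (C + P'))%VS in key.
have g1 := dimvS key.
have g2 := dimcapD S (P + Q) K.
have g6 : (\dim K <= \dim (A :&: (B + C)) + \dim (B :&: (A + C)) + \dim (C :&: (A + B)))%N := dimK A B C.
have c1 := dimcap S (P + Q).
have c4 := dimcap A (B + C).
have c5 := dimcap B (A + C).
have c6 := dimcap C (A + B).
have l1 := dimcap3 S (A + C) (B + T').
have l2 := dimcap S (A + C).
have l3 := dimcap S (B + T').
have m0 := @dimL2 S B T T' (subv_trans (capvSl _ _) (capvSl _ _)).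
have t1 : (\dim (T :&: (A + Q')) + \dim (T :&: (C + P')) <= \dim T' + \dim T)%N := dimcap3 _ _ _.
have l3' := dimcap T (A + Q').
have l4 := dimcap T (C + P').
have m1 := @dimL2 T A Q Q' (capvSl _ _).
have m2 := @dimL2 T C P P' (capvSl _ _).
have n1 : (\dim Q' + \dim (Q + (B + C)) = \dim Q + \dim (B + C))%N := dimcap _ _.
have n2 : (\dim P' + \dim (P + (A + B)) = \dim P + \dim (A + B))%N := dimcap _ _.
lia.
Qed.

End Core.

Local Open Scope classical_set_scope.
Local Open Scope ring_scope.

Lemma cvg_seqsum (R : realType) n (g : nat -> {set 'I_n} -> nat) (c : nat -> R) (h : {set 'I_n} -> nat)
  (S : seq {set 'I_n}) :
  (forall A, (fun k => c k * ((g k A)%:R)) @ \oo --> ((h A)%:R : R)) ->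
  (fun k => c k * ((\sum_(X <- S) g k X)%N%:R)) @ \oo --> ((\sum_(X <- S) h X)%N%:R : R).
Proof.
move=> hc; elim: S => [|X S IH].
  rewrite big_nil; under eq_fun do rewrite big_nil mulr0. exact: cvg_cst.
rewrite big_cons natrD; under eq_fun do rewrite big_cons natrD mulrDr.
exact: cvgD.
Qed.

Lemma nolimit (R : realType) n (h : {set 'I_n} -> nat) (Pr : ({set 'I_n} -> nat) -> Prop)
  (Ls Rs : seq {set 'I_n}) :
  (forall g, Pr g -> (\sum_(X <- Ls) g X <= \sum_(X <- Rs) g X)%N) ->
  (\sum_(X <- Rs) h X < \sum_(X <- Ls) h X)%N ->
  ~ exists (g : nat -> {set 'I_n} -> nat) (c : nat -> R),
    [/\ forall k, Pr (g k), forall k, 0 < c k &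
        forall A, (fun k => c k * ((g k A)%:R)) @ \oo --> ((h A)%:R : R)].
Proof.
move=> ineq lt [g [c [Pg cpos hc]]].
have cL := cvg_seqsum (S:=Ls) hc; have cR := cvg_seqsum (S:=Rs) hc.
have cD : ((fun k => c k * ((\sum_(X <- Rs) g k X)%N%:R)) - (fun k => c k * ((\sum_(X <- Ls) g k X)%N%:R))) @ \oo --> (((\sum_(X <- Rs) h X)%N%:R : R) - (\sum_(X <- Ls) h X)%N%:R).
  by apply: cvgB.
have lim0 : 0 <= lim ((fun k => c k * ((\sum_(X <- Rs) g k X)%N%:R)) - (fun k => c k * ((\sum_(X <- Ls) g k X)%N%:R))  @ \oo).
  apply: limr_ge; first by apply/cvg_ex; eexists; exact: cD.
  near=> k => /=; rewrite -mulrBr mulr_ge0 ?(ltW (cpos k)) // subr_ge0 ler_nat.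
  exact: ineq.
rewrite (cvg_lim _ cD) // subr_ge0 ler_nat in lim0.
by move: lt; rewrite ltnNge lim0.
Unshelve. all: end_near.
Qed.

Local Close Scope classical_set_scope.
Local Open Scope ring_scope.

Definition s1 n (x : 'I_n) : {set 'I_n} := [set x].
Definition s2 n (x y : 'I_n) : {set 'I_n} := x |: [set y].
Definition s3 n (x y z : 'I_n) : {set 'I_n} := x |: (y |: [set z]).

Section Sums.
Variables (F : fieldType) (vT : vectType F) (n : nat) (V : 'I_n -> {vspace vT}).

Lemma sum1 x : (\sum_(i in [set x]) V i = V x)%VS.
Proof. by rewrite big_set1. Qed.

Lemma sumU1 x A : (\sum_(i in x |: A) V i = V x + \sum_(i in A) V i)%VS.
Proof.
case: (boolP (x \in A)) => xA; last by rewrite big_setU1.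
have -> : x |: A = A by apply/setP => y; rewrite !inE; apply/orb_idl => /eqP ->.
apply/esym/addv_idPr.
exact: (sumv_sup x).
Qed.

Lemma sum_s1 x : (\sum_(i in s1 x) V i = V x)%VS.
Proof. exact: sum1. Qed.
Lemma sum_s2 x y : (\sum_(i in s2 x y) V i = V x + V y)%VS.
Proof. by rewrite /s2 sumU1 sum1. Qed.
Lemma sum_s3 x y z : (\sum_(i in s3 x y z) V i = V x + (V y + V z))%VS.
Proof. by rewrite /s3 !sumU1 sum1. Qed.
End Sums.

Definition LsI n (a b c p q t s : 'I_n) : seq {set 'I_n} :=
  [:: s1 t; s2 a q; s2 b c; s2 c p; s2 a b; s2 b s; s2 a c; s2 p q; s2 a b; s2 b c;
      s3 t a c; s2 p b; s2 q b; s3 a b c; s3 b a c; s3 c a b; s3 a b c; s3 b a c;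
      s3 c a b; s3 a b c; s3 b a c; s3 c a b].
Definition RsI n (a b c p q t s : 'I_n) : seq {set 'I_n} :=
  [:: s3 t a q; s3 q b c; s3 t c p; s3 p a b; s3 t b s; s3 s a c; s3 s p q; s3 p a b;
      s3 q b c; s1 t; s2 a c; s1 p; s1 b; s1 q; s1 b;
      s1 a; s2 b c; s1 b; s2 a c; s1 c; s2 a b;
      s1 a; s2 b c; s1 b; s2 a c; s1 c; s2 a b;
      s1 a; s2 b c; s1 b; s2 a c; s1 c; s2 a b].

Definition LsII n (a b c p q t s : 'I_n) : seq {set 'I_n} :=
  [:: s1 s; s2 a c; s2 b t; s2 a q; s2 b c; s2 c p; s2 a b; s3 s p q;
      s3 a b c; s3 b a c; s3 c a b].
Definition RsII n (a b c p q t s : 'I_n) : seq {set 'I_n} :=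
  [:: s3 s a c; s3 s b t; s3 t a q; s3 q b c; s3 t c p; s3 p a b; s1 s; s2 p q;
      s1 a; s2 b c; s1 b; s2 a c; s1 c; s2 a b].

Lemma gI (F : fieldType) (vT : vectType F) n (V : 'I_n -> {vspace vT}) a b c p q t s :
  (2%:R : F) != 0 ->
  (\sum_(X <- LsI a b c p q t s) \dim (\sum_(i in X) V i) <=
   \sum_(X <- RsI a b c p q t s) \dim (\sum_(i in X) V i))%N.
Proof.
move=> two; rewrite /LsI /RsI !big_cons big_nil !sum_s1 !sum_s2 !sum_s3.
have := fano_ineq (V a) (V b) (V c) (V p) (V q) (V t) (V s) two; lia.
Qed.

Lemma gII (F : fieldType) (vT : vectType F) n (V : 'I_n -> {vspace vT}) a b c p q t s :
  (2%:R : F) = 0 ->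
  (\sum_(X <- LsII a b c p q t s) \dim (\sum_(i in X) V i) <=
   \sum_(X <- RsII a b c p q t s) \dim (\sum_(i in X) V i))%N.
Proof.
move=> two; rewrite /LsII /RsII !big_cons big_nil !sum_s1 !sum_s2 !sum_s3.
have := nonfano_ineq (V a) (V b) (V c) (V p) (V q) (V t) (V s) two; lia.
Qed.


Lemma memE (F : fieldType) (vT : vectType F) (x y : vT) (W : {vspace vT}) : x = y -> y \in W -> x \in W.
Proof. by move=> ->. Qed.

Ltac inl := first [ apply: memv_line | apply: (subvP (addvSl _ _)); inl | apply: (subvP (addvSr _ _)); inl ].

Section Vals.
Variables (F : fieldType) (vT : vectType F) (u1 u2 u3 : vT).
Hypothesis hU : (3 <= \dim (<[u1]> + (<[u2]> + <[u3]>)))%N.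

Lemma e1 : u3 = (u1 + u2 + u3) - u1 - u2. Proof. by vring. Qed.
Lemma e2 : u3 = (u2 + u3) - u2. Proof. by vring. Qed.
Lemma e3 : u2 = (u1 + u2) - u1. Proof. by vring. Qed.
Lemma e4 : u3 = (u1 + u3) - u1. Proof. by vring. Qed.
Lemma e5 : u1 = (u1 + u2) - u2. Proof. by vring. Qed.
Lemma e6 : u2 = (u1 + u2 + u3) - u1 - u3. Proof. by vring. Qed.
Lemma e7 : u1 + u2 + u3 = u1 + (u2 + u3). Proof. by vring. Qed.
Lemma e8 : u1 + u2 + u3 = u2 + (u1 + u3). Proof. by vring. Qed.
Lemma e9 : u1 + u3 = (u1 + u2 + u3) - u2. Proof. by vring. Qed.

Ltac comb n := match n with
  | O => inl
  | S ?m => first [ inl | apply: rpredD; comb m | apply: rpredB; comb m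
     | apply: (memE e1); comb m | apply: (memE e2); comb m | apply: (memE e3); comb m
     | apply: (memE e4); comb m | apply: (memE e5); comb m | apply: (memE e6); comb m
     | apply: (memE e7); comb m | apply: (memE e8); comb m | apply: (memE e9); comb m ]
  end.

Lemma lowb (X Y : {vspace vT}) : u1 \in (X + Y)%VS -> u2 \in (X + Y)%VS -> u3 \in (X + Y)%VS ->
  (3 <= \dim X + \dim Y)%N.
Proof.
move=> h1 h2 h3.
have h : (<[u1]> + (<[u2]> + <[u3]>) <= X + Y)%VS by rewrite !subv_add -!memvE h1 h2 h3.
have := dimvS h; have := dimcap X Y; lia.
Qed.

Lemma le1 (v : vT) : (\dim <[v]> <= 1)%N.
Proof. by rewrite dim_vline; case: (v != 0). Qed.
Lemma le2 (x y : vT) : (\dim (<[x]> + <[y]>) <= 2)%N.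
Proof. have := dimcap <[x]> <[y]>; have := le1 x; have := le1 y; lia. Qed.
Lemma le3 (x y z : vT) : x \in (<[y]> + <[z]>)%VS -> (\dim (<[x]> + (<[y]> + <[z]>)) <= 2)%N.
Proof. by move=> h; rewrite (addv_idPr _) ?le2 // -memvE. Qed.

Lemma lo1 (x y z : vT) : u1 \in (<[x]> + (<[y]> + <[z]>))%VS -> u2 \in (<[x]> + (<[y]> + <[z]>))%VS ->
  u3 \in (<[x]> + (<[y]> + <[z]>))%VS -> (1 <= \dim <[x]>)%N.
Proof. move=> h1 h2 h3; have := lowb h1 h2 h3; have := le2 y z; lia. Qed.
Lemma lo2 (x y z : vT) : u1 \in (<[x]> + <[y]> + <[z]>)%VS -> u2 \in (<[x]> + <[y]> + <[z]>)%VS ->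
  u3 \in (<[x]> + <[y]> + <[z]>)%VS -> (2 <= \dim (<[x]> + <[y]>))%N.
Proof. move=> h1 h2 h3; have := lowb h1 h2 h3; have := le1 z; lia. Qed.
Lemma lo3 (x y z : vT) : u1 \in (<[x]> + (<[y]> + <[z]>) + 0)%VS -> u2 \in (<[x]> + (<[y]> + <[z]>) + 0)%VS ->
  u3 \in (<[x]> + (<[y]> + <[z]>) + 0)%VS -> (3 <= \dim (<[x]> + (<[y]> + <[z]>)))%N.
Proof. move=> h1 h2 h3; have := lowb h1 h2 h3; rewrite dimv0; lia. Qed.

Let T := u1 + u2 + u3.
Let P := u1 + u2.
Let Q := u2 + u3.
Let S := u1 + u3.

Lemma lv0 : (1 <= \dim <[T]>)%N.
Proof. by rewrite /T /P /Q /S; apply: (lo1 (y:=u1) (z:=u2)); comb 4%N. Qed.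
Lemma lv1 : (2 <= \dim (<[u1]> + <[Q]>))%N.
Proof. by rewrite /T /P /Q /S; apply: (lo2 (z:=u2)); comb 4%N. Qed.
Lemma lv2 : (2 <= \dim (<[u2]> + <[u3]>))%N.
Proof. by rewrite /T /P /Q /S; apply: (lo2 (z:=u1)); comb 4%N. Qed.
Lemma lv3 : (2 <= \dim (<[u3]> + <[P]>))%N.
Proof. by rewrite /T /P /Q /S; apply: (lo2 (z:=u1)); comb 4%N. Qed.
Lemma lv4 : (2 <= \dim (<[u1]> + <[u2]>))%N.
Proof. by rewrite /T /P /Q /S; apply: (lo2 (z:=u3)); comb 4%N. Qed.
Lemma lv5 : (2 <= \dim (<[u2]> + <[S]>))%N.
Proof. by rewrite /T /P /Q /S; apply: (lo2 (z:=u1)); comb 4%N. Qed.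
Lemma lv6 : (2 <= \dim (<[u1]> + <[u3]>))%N.
Proof. by rewrite /T /P /Q /S; apply: (lo2 (z:=u2)); comb 4%N. Qed.
Lemma lv7 : (2 <= \dim (<[P]> + <[Q]>))%N.
Proof. by rewrite /T /P /Q /S; apply: (lo2 (z:=u2)); comb 4%N. Qed.
Lemma lv8 : (3 <= \dim (<[T]> + (<[u1]> + <[u3]>)))%N.
Proof. by rewrite /T /P /Q /S; apply: lo3; comb 4%N. Qed.
Lemma lv9 : (2 <= \dim (<[P]> + <[u2]>))%N.
Proof. by rewrite /T /P /Q /S; apply: (lo2 (z:=u3)); comb 4%N. Qed.
Lemma lv10 : (2 <= \dim (<[Q]> + <[u2]>))%N.
Proof. by rewrite /T /P /Q /S; apply: (lo2 (z:=u1)); comb 4%N. Qed.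
Lemma lv11 : (3 <= \dim (<[u1]> + (<[u2]> + <[u3]>)))%N.
Proof. by rewrite /T /P /Q /S; apply: lo3; comb 4%N. Qed.
Lemma lv12 : (3 <= \dim (<[u2]> + (<[u1]> + <[u3]>)))%N.
Proof. by rewrite /T /P /Q /S; apply: lo3; comb 4%N. Qed.
Lemma lv13 : (3 <= \dim (<[u3]> + (<[u1]> + <[u2]>)))%N.
Proof. by rewrite /T /P /Q /S; apply: lo3; comb 4%N. Qed.
Lemma lv14 : (1 <= \dim <[S]>)%N.
Proof. by rewrite /T /P /Q /S; apply: (lo1 (y:=u1) (z:=u2)); comb 4%N. Qed.
Lemma lv15 : (2 <= \dim (<[u2]> + <[T]>))%N.
Proof. by rewrite /T /P /Q /S; apply: (lo2 (z:=u1)); comb 4%N. Qed.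
Lemma uv0 : (\dim (<[T]> + (<[u1]> + <[Q]>)) <= 2)%N.
Proof. by rewrite /T /P /Q /S; apply: le3; comb 4%N. Qed.
Lemma uv1 : (\dim (<[Q]> + (<[u2]> + <[u3]>)) <= 2)%N.
Proof. by rewrite /T /P /Q /S; apply: le3; comb 4%N. Qed.
Lemma uv2 : (\dim (<[T]> + (<[u3]> + <[P]>)) <= 2)%N.
Proof. by rewrite /T /P /Q /S; apply: le3; comb 4%N. Qed.
Lemma uv3 : (\dim (<[P]> + (<[u1]> + <[u2]>)) <= 2)%N.
Proof. by rewrite /T /P /Q /S; apply: le3; comb 4%N. Qed.
Lemma uv4 : (\dim (<[T]> + (<[u2]> + <[S]>)) <= 2)%N.
Proof. by rewrite /T /P /Q /S; apply: le3; comb 4%N. Qed.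
Lemma uv5 : (\dim (<[S]> + (<[u1]> + <[u3]>)) <= 2)%N.
Proof. by rewrite /T /P /Q /S; apply: le3; comb 4%N. Qed.
Lemma uv6 : (\dim (<[S]> + (<[u2]> + <[T]>)) <= 2)%N.
Proof. by rewrite /T /P /Q /S; apply: le3; comb 4%N. Qed.

End Vals.


Lemma card_char (F : finFieldType) p : p \in [pchar F] -> exists m, (0 < m)%N /\ #|F| = (p ^ m)%N.
Proof.
move=> hp; have := card_pprimeChar hp => /= e.
exists (logn p #|F|); split => //.
case: (logn p #|F|) e => // e; have := finNzRing_gt1 F; rewrite e //.
Qed.

Lemma rep_self (F : finFieldType) (vT : vectType F) n (w : 'I_n -> vT) :
  q_representable #|F| (span_rank w).
Proof. by exists F, vT, (fun i => <[w i]>%VS). Qed.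

Lemma odd_two (F : finFieldType) p m : prime p -> odd p -> #|F| = (p ^ m)%N -> (2%:R : F) != 0.
Proof.
move=> pp op cF; have hp := card_finPcharP cF pp.
apply/negP => /eqP h2.
have : 2%N \in [pchar F] by rewrite inE h2 eqxx.
rewrite (pcharf_eq hp) => /eqnP e; move: op; rewrite -e.
by [].
Qed.

Lemma even_two (F : finFieldType) m : (0 < m)%N -> #|F| = (2 ^ m)%N -> (2%:R : F) = 0.
Proof.
move=> m0 cF; have hp := card_finPcharP cF (isT : prime 2).
exact: pcharf0 hp.
Qed.

Lemma uvSPQ (F : fieldType) (vT : vectType F) (u1 u2 u3 : vT) :
  (3 <= \dim (<[u1]> + (<[u2]> + <[u3]>)))%N -> (2%:R : F) = 0 ->
  (\dim (<[u1 + u3]> + (<[u1 + u2]> + <[u2 + u3]>)) <= 2)%N.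
Proof.
move=> hU h; apply: (le3 hU).
have z : u2 *+ 2 = 0 by rewrite -scaler_nat h scale0r.
have -> : u1 + u3 = (u1 + u2) + (u2 + u3) - u2 *+ 2 by rewrite mulr2n; vring.
by rewrite z subr0; apply: memv_add; apply: memv_line.
Qed.

Lemma lvSPQ (F : fieldType) (vT : vectType F) (u1 u2 u3 : vT) :
  (3 <= \dim (<[u1]> + (<[u2]> + <[u3]>)))%N -> (2%:R : F) != 0 ->
  (3 <= \dim (<[u1 + u3]> + (<[u1 + u2]> + <[u2 + u3]>)))%N.
Proof.
move=> hU h; set W := (<[u1 + u3]> + (<[u1 + u2]> + <[u2 + u3]>) + 0)%VS.
have m1 : u1 \in W.
  have -> : u1 = (2%:R)^-1 *: (u1 *+ 2) by rewrite -scaler_nat scalerA mulVf // scale1r.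
  apply: memvZ.
  have -> : u1 *+ 2 = (u1 + u3) + (u1 + u2) - (u2 + u3) by rewrite mulr2n; vring.
  rewrite /W; apply: rpredB; first apply: rpredD.
  - by apply: (subvP (addvSl _ _)); apply: (subvP (addvSl _ _)); apply: memv_line.
  - by apply: (subvP (addvSl _ _)); apply: (subvP (addvSr _ _)); apply: (subvP (addvSl _ _)); apply: memv_line.
  - by apply: (subvP (addvSl _ _)); apply: (subvP (addvSr _ _)); apply: (subvP (addvSr _ _)); apply: memv_line.
have mP : u1 + u2 \in W.
  by apply: (subvP (addvSl _ _)); apply: (subvP (addvSr _ _)); apply: (subvP (addvSl _ _)); apply: memv_line.
have mS : u1 + u3 \in W.
  by apply: (subvP (addvSl _ _)); apply: (subvP (addvSl _ _)); apply: memv_line.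
apply: (lo3 hU); rewrite -/W.
- exact: m1.
- by apply: (memE (y := (u1 + u2) - u1)); [vring | rewrite rpredB].
- by apply: (memE (y := (u1 + u3) - u1)); [vring | rewrite rpredB].
Qed.

Lemma hU3 (F : fieldType) (vT : vectType F) (u1 u2 u3 : vT) : free [:: u1; u2; u3] ->
  (3 <= \dim (<[u1]> + (<[u2]> + <[u3]>)))%N.
Proof.
move=> /eqP; rewrite !span_cons span_nil addv0 /= => ->; by [].
Qed.

Lemma hU5 (F : fieldType) (vT : vectType F) (u1 u2 u3 u4 u5 : vT) : free [:: u1; u2; u3; u4; u5] ->
  (3 <= \dim (<[u1]> + (<[u2]> + <[u3]>)))%N.
Proof.
move=> /eqP; rewrite !span_cons span_nil addv0 /= => e.
have e2 : (<[u1]> + (<[u2]> + (<[u3]> + (<[u4]> + <[u5]>))) = (<[u1]> + (<[u2]> + <[u3]>)) + (<[u4]> + <[u5]>))%VS.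
  by rewrite !addvA.
rewrite e2 in e.
have := dimcap (<[u1]> + (<[u2]> + <[u3]>))%VS (<[u4]> + <[u5]>)%VS.
have := dimcap <[u4]> <[u5]>; rewrite !dim_vline; case: (u4 != 0); case: (u5 != 0) => /=; lia.
Qed.

Section Singles.
Variables (F : fieldType) (vT : vectType F) (u1 u2 u3 : vT).
Lemma sgT : (\dim <[u1 + u2 + u3]> <= 1)%N. Proof. exact: le1. Qed.
Lemma sgP : (\dim <[u1 + u2]> <= 1)%N. Proof. exact: le1. Qed.
Lemma sgQ : (\dim <[u2 + u3]> <= 1)%N. Proof. exact: le1. Qed.
Lemma sgS : (\dim <[u1 + u3]> <= 1)%N. Proof. exact: le1. Qed.
Lemma pPQ : (3 <= \dim (<[u1]> + (<[u2]> + <[u3]>)))%N -> (\dim (<[u1 + u2]> + <[u2 + u3]>) <= 2)%N.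
Proof. move=> hU; exact: le2 hU _ _. Qed.
End Singles.

Local Open Scope classical_set_scope.
Local Open Scope ring_scope.

Lemma partI (R : realType) (F : finFieldType) (vT : vectType F) (u1 u2 u3 : vT) :
     2%N \in [pchar F] -> free [:: u1; u2; u3] ->
     even_representable (span_rank (X1_gens u1 u2 u3)) /\
     ~ almost_odd_representable
         (fun A => ((span_rank (X1_gens u1 u2 u3) A)%:R : R)).
Proof.
move=> h2 hfree; split.
  have [m [m0 cF]] := card_char h2.
  by exists m; split => //; rewrite -cF; apply: rep_self.
have hU := hU3 hfree.
have two : (2%:R : F) = 0 := pcharf0 h2.
pose a := @Ordinal 7 0 isT; pose b := @Ordinal 7 1 isT; pose c := @Ordinal 7 2 isT.
pose p := @Ordinal 7 3 isT; pose q := @Ordinal 7 4 isT; pose t := @Ordinal 7 5 isT.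
pose s := @Ordinal 7 6 isT.
apply: (nolimit (Pr := @odd_representable 7) (Ls := LsI a b c p q t s) (Rs := RsI a b c p q t s)).
  move=> g [pr [m [pp op m0 [F' [vT' [V [cF hg]]]]]]].
  rewrite !(eq_bigr _ (fun X _ => hg X)).
  apply: gI; exact: odd_two pp op cF.
rewrite /LsI /RsI !big_cons !big_nil /span_rank !sum_s1 !sum_s2 !sum_s3.
rewrite /X1_gens !(tnth_nth 0) /=.
have := lv0 hU; have := lv1 hU; have := lv2 hU; have := lv3 hU; have := lv4 hU; have := lv5 hU; have := lv6 hU; have := lv7 hU; have := lv8 hU; have := lv9 hU; have := lv10 hU; have := lv11 hU; have := lv12 hU; have := lv13 hU; have := lv14 hU; have := lv15 hU; 
have := uv0 hU; have := uv1 hU; have := uv2 hU; have := uv3 hU; have := uv4 hU; have := uv5 hU; have := uv6 hU; 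
have := uvSPQ hU two; have := sgT u1 u2 u3; have := sgP u1 u2; have := sgQ u2 u3; have := sgS u1 u3;
have := le1 u1; have := le1 u2; have := le1 u3; have := le2 hU u1 u3; have := le2 hU u2 u3; have := le2 hU u1 u2.
lia.
Qed.

Lemma partII (R : realType) (F' : finFieldType) (vT : vectType F') (u1 u2 u3 u4 u5 : vT) :
     (exists p : nat, p \in [pchar F'] /\ odd p) ->
     free [:: u1; u2; u3; u4; u5] ->
     odd_representable (span_rank (X2_gens u1 u2 u3 u4 u5)) /\
     ~ almost_even_representable
         (fun A => ((span_rank (X2_gens u1 u2 u3 u4 u5) A)%:R : R)).
Proof.
move=> [pr [hp op]] hfree.
have [m [m0 cF]] := card_char hp.
have pp := pcharf_prime hp.
split.
  by exists pr, m; split => //; rewrite -cF; apply: rep_self.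
have hU := hU5 hfree.
have two : (2%:R : F') != 0 := odd_two pp op cF.
pose a := @Ordinal 13 0 isT; pose b := @Ordinal 13 1 isT; pose c := @Ordinal 13 2 isT.
pose p := @Ordinal 13 7 isT; pose q := @Ordinal 13 9 isT; pose t := @Ordinal 13 5 isT.
pose s := @Ordinal 13 8 isT.
apply: (nolimit (Pr := @even_representable 13) (Ls := LsII a b c p q t s) (Rs := RsII a b c p q t s)).
  move=> g [m' [m0' [F2 [vT2 [V [cF2 hg]]]]]].
  rewrite !(eq_bigr _ (fun X _ => hg X)).
  apply: gII; exact: even_two m0' cF2.
rewrite /LsII /RsII !big_cons !big_nil /span_rank !sum_s1 !sum_s2 !sum_s3.
rewrite /X2_gens !(tnth_nth 0) /=.
have := lv14 hU; have := lv6 hU; have := lv15 hU; have := lv1 hU; have := lv2 hU; have := lv3 hU;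
have := lv4 hU; have := lvSPQ hU two; have := lv11 hU; have := lv12 hU; have := lv13 hU.
have := uv5 hU; have := uv6 hU; have := uv0 hU; have := uv1 hU; have := uv2 hU; have := uv3 hU.
have := sgS u1 u3; have := pPQ hU.
have := le1 u1; have := le1 u2; have := le1 u3; have := le2 hU u1 u3; have := le2 hU u2 u3; have := le2 hU u1 u2.
lia.
Qed.

Local Close Scope classical_set_scope.

Theorem theorem6 (R : realType) :
  (forall (F : finFieldType) (vT : vectType F) (u1 u2 u3 : vT),
     2%N \in [pchar F] -> free [:: u1; u2; u3] ->
     even_representable (span_rank (X1_gens u1 u2 u3)) /\
     ~ almost_odd_representable
         (fun A => ((span_rank (X1_gens u1 u2 u3) A)%:R : R)))
  /\
  (forall (F' : finFieldType) (vT : vectType F') (u1 u2 u3 u4 u5 : vT),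
     (exists p : nat, p \in [pchar F'] /\ odd p) ->
     free [:: u1; u2; u3; u4; u5] ->
     odd_representable (span_rank (X2_gens u1 u2 u3 u4 u5)) /\
     ~ almost_even_representable
         (fun A => ((span_rank (X2_gens u1 u2 u3 u4 u5) A)%:R : R))).
Proof.
split.
- move=> F vT u1 u2 u3; exact: partI.
- move=> F' vT u1 u2 u3 u4 u5; exact: partII.
Qed.
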